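(* Let $l,r$ be positive integers. For every $n\ge r$, the sequence $k\mapsto\mathcal{A}_r^{(l)}(n,k)$ is log-concave (and hence unimodal).
   Context: A subexceedant function on $[n]$ is a map $f:[n]\to[n]$ with $1\le f(i)\le i$ for all $i$. Its block leader set is $\mathrm{bl}(f)=\{i\in[n]: f(i)\notin f(\{1,\dots,i-1\})\}$. For positive integers $l,r$, $\mathcal{A}_r^{(l)}(n,k)$ is the number of $l$-tuples $(f_1,\dots,f_l)$ of subexceedant functions on $[n]$ such that $\{1,\dots,r\}\subseteq\mathrm{bl}(f_1)$, $|\mathrm{bl}(f_1)|=k+1$, and $\mathrm{bl}(f_1)=\cdots=\mathrm{bl}(f_l)$. A sequence $(a_k)$ is log-concave if $a_k^2\ge a_{k-1}a_{k+1}$ for all $k$. *)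

(* Defs.v *)
From mathcomp Require Import all_boot.
Set Implicit Arguments. Unset Strict Implicit. Unset Printing Implicit Defensive.

(* Convention: [n] = {1,...,n} is represented by 'I_n = {0,...,n-1},
   the element i+1 of [n] corresponding to i : 'I_n.  Then the condition
   1 <= f(i) <= i becomes f i <= i (0-indexed). *)

Definition subexceedant (n : nat) (f : {ffun 'I_n -> 'I_n}) : bool :=
  [forall i, (f i <= i)%N].

Definition bl (n : nat) (f : {ffun 'I_n -> 'I_n}) : {set 'I_n} :=
  [set i : 'I_n | f i \notin (f @: [set j : 'I_n | (j < i)%N])].

(* The tuple is indexed by 'I_l, with f_1 at
   index 0 (only used when l > 0). *)
Definition A (l r n k : nat) : nat :=
  #|[set t : {ffun 'I_l -> {ffun 'I_n -> 'I_n}} |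
      [forall j, subexceedant (t j)] &&
      [exists j0 : 'I_l,
         [&& (val j0 == 0%N),
             [forall i : 'I_n, (i < r)%N ==> (i \in bl (t j0))],
             #|bl (t j0)| == k.+1 &
             [forall j, bl (t j) == bl (t j0)]]]]|.

Definition log_concave (a : nat -> nat) : Prop :=
  forall k, (a k * a k.+2 <= a k.+1 ^ 2)%N.

Definition unimodal (a : nat -> nat) : Prop :=
  exists m, (forall k, (k < m)%N -> (a k <= a k.+1)%N) /\
            (forall k, (m <= k)%N -> (a k.+1 <= a k)%N).

(* Main.v *)
Require Import Defs.
From mathcomp Require Import all_boot zify.

Lemma pw_le l a b : a <= b -> a ^ l <= b ^ l.
Proof. by move=> h; elim: l => // l IH; rewrite !expnS leq_mul. Qed.

Lemma step_lemma (c e d f P Q : nat) : 0 < c -> c*P <= d*Q -> e*d <= f*c -> e*P <= f*Q.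
Proof.
move=> hc H E; rewrite -(leq_pmul2l hc).
have h1 := leq_mul (leqnn e) H. have h2 := leq_mul E (leqnn Q). nia.
Qed.

Lemma cancel_lemma (c c' d d' u v w z : nat) : 0 < u * v ->
  (c*(v*w)) * (c'*(z*u)) <= (d*u^2) * (d'*v^2) -> c*c'*(z*w) <= d*d'*(u*v).
Proof.
move=> huv H; rewrite -(leq_pmul2r huv).
have -> : c * c' * (z * w) * (u * v) = (c*(v*w)) * (c'*(z*u)) by nia.
by have -> : d * d' * (u * v) * (u * v) = (d*u^2) * (d'*v^2) by nia.
Qed.

Lemma B1 K y : K.+2 * y.+2 * K.+1 * K.+3 * (K.+1 * y) <= K.+1 * y.+1 * K.+2 * K.+2 * (K.+2 * y.+1).
Proof. nia. Qed.
Lemma B4 K y : K.+2 * y.+2 * y.+3 * y.+1 * (K * y.+1) <= K.+1 * y.+1 * y.+2 * y.+2 * (K.+1 * y.+2).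
Proof. nia. Qed.

Lemma B3 K y : K.+2 * y.+2 * y.+3 * K.+3 * (K.+1 * y * (K * y.+1)) <= K.+1 * y.+1 * K.+2 * y.+2 * (K.+2 * y.+1 * (K.+1 * y.+2)).
Proof.
have h1 : K * K.+3 <= K.+1 * K.+2 by nia.
have h2 : y * y.+3 <= y.+1 * y.+2 by nia.
have := leq_mul h1 h2. move=> h3.
have := leq_mul (leqnn (K.+2 * y.+2 * K.+1 * y.+1)) h3. nia.
Qed.

Lemma core l K y al be ga de : 0 < l ->
  ((K.+2)*(y.+1))^l * (be*de) <= ((K.+1)*y)^l * al^2 ->
  ((K.+1)*(y.+2))^l * (ga*al) <= (K*(y.+1))^l * be^2 ->
  (al = 0 \/ be = 0 -> ga * de = 0) ->
  ((K.+2)*(y.+2))^l * (((K.+1)^l*be + (y.+3)^l*ga) * ((K.+3)^l*de + (y.+1)^l*al))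
  <= ((K.+1)*(y.+1))^l * ((K.+2)^l*al + (y.+2)^l*be)^2.
Proof.
move=> hl H1 H2 H3.
have cpos : 0 < ((K.+2)*(y.+1))^l by rewrite expn_gt0 muln_gt0.
have c'pos : 0 < ((K.+1)*(y.+2))^l by rewrite expn_gt0 muln_gt0.
have T2 : ((K.+2)*(y.+2))^l * (K.+1)^l * (y.+1)^l = ((K.+1)*(y.+1))^l * (K.+2)^l * (y.+2)^l.
  by rewrite -!expnMn; congr (_ ^ _); nia.
have T1 : ((K.+2)*(y.+2))^l * (K.+1)^l * (K.+3)^l * (be*de) <= ((K.+1)*(y.+1))^l * (K.+2)^l * (K.+2)^l * al^2.
  eapply step_lemma; [exact: cpos|exact: H1|].
  rewrite -!expnMn; apply: pw_le; exact: B1.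
have T4 : ((K.+2)*(y.+2))^l * (y.+3)^l * (y.+1)^l * (ga*al) <= ((K.+1)*(y.+1))^l * (y.+2)^l * (y.+2)^l * be^2.
  eapply step_lemma; [exact: c'pos|exact: H2|].
  rewrite -!expnMn; apply: pw_le; exact: B4.
have T3 : ((K.+2)*(y.+2))^l * (y.+3)^l * (K.+3)^l * (ga*de) <= ((K.+1)*(y.+1))^l * (K.+2)^l * (y.+2)^l * (al*be).
  case: (posnP al) => [a0|apos]; first by rewrite H3 //; [rewrite muln0|left].
  case: (posnP be) => [b0|bpos]; first by rewrite H3 //; [rewrite muln0|right].
  have cc : 0 < ((K.+2)*(y.+1))^l * ((K.+1)*(y.+2))^l by rewrite muln_gt0 cpos.
  have abpos : 0 < al * be by rewrite muln_gt0 apos.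
  eapply step_lemma; [exact: cc|exact: (@cancel_lemma _ _ _ _ _ _ _ _ abpos (leq_mul H1 H2))|].
  rewrite -!expnMn; apply: pw_le; exact: B3.
have T2' := congr1 (muln^~ (al*be)) T2. rewrite /= in T2'.
move: T1 T2' T3 T4.
move: (((K.+2)*(y.+2))^l) (((K.+1)*(y.+1))^l) ((K.+2)^l) ((y.+2)^l) ((K.+1)^l) ((K.+3)^l) ((y.+1)^l) ((y.+3)^l).
clear.
move=> D C X Y X1 Xp Y1 Yp T1 T2 T3 T4.
nia.
Qed.
Fixpoint aa (l r n k : nat) : nat :=
  match n with
  | 0 => (k == 0)
  | m.+1 => (r <= m) * k ^ l * aa l r m k + (0 < k) * (m.+2 - k) ^ l * aa l r m k.-1
  end.

Lemma aa_small l r n k : 0 < l -> n <= r -> aa l r n k = (k == n).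
Proof.
move=> hl; elim: n k => [|n IH] k hn //=.
rewrite !IH ?(ltnW hn) // leqNgt hn /= mul0n add0n.
case: k => [|k] //=; rewrite !mul1n eqSS.
case: eqP => [->|/eqP hk]; first by rewrite subSnn exp1n.
by rewrite muln0.
Qed.

Lemma aa_rec l r m k : r <= m -> aa l r m.+1 k = k ^ l * aa l r m k + (0 < k) * (m.+2 - k) ^ l * aa l r m k.-1.
Proof. by move=> h /=; rewrite h mul1n. Qed.

Lemma aa_pos l r m K : 0 < l -> 0 < r -> r <= m -> (0 < aa l r m K) = (r <= K <= m).
Proof.
move=> hl hr; elim: m K => [|m IH] K hm; first by move: hm; rewrite leqn0 => /eqP; lia.
case: (leqP r m) => hrm; last first.
  have -> : r = m.+1 by lia.
  rewrite aa_small //; case: eqP => [->|/eqP]; first by rewrite leqnn.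
  lia.
rewrite aa_rec // addn_gt0 !muln_gt0 !expn_gt0 !IH //.
case: K => [|K] /=.
  have -> : (r <= 0) = false by lia.
  by rewrite andbF.
rewrite subSS.
case: (ltnP K m) => h1; last first.
  case: (ltnP m K) => h2; first by rewrite !andbF; lia.
  have -> : K = m by lia.
  rewrite subSn // subnn /=; lia.
have -> : 0 < m.+1 - K by lia.
rewrite /=; lia.
Qed.

Lemma aa0 l r m : 0 < l -> r <= m -> aa l r m.+1 0 = 0.
Proof. by move=> hl h; rewrite aa_rec // exp0n. Qed.

Lemma aaJ l r m K : 0 < l -> 0 < r -> r <= m ->
  (K.+1*(m-K))^l * aa l r m K * aa l r m K.+2 <= (K*(m-K.+1))^l * aa l r m K.+1 ^2.
Proof.
move=> hl hr hm; rewrite -(subnKC hm); clear hm; move: (m - r) => d0; clear m; elim: d0 K => [|d IH] K.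
  rewrite addn0 !aa_small //; case: eqP => [->|_]; last by rewrite muln0 mul0n.
  have -> : (r.+2 == r) = false by apply/eqP; lia.
  by rewrite muln0.
rewrite addnS; set m := r + d; have hm' : r <= m by rewrite leq_addr.
case: K => [|K]; first by rewrite aa0 // muln0 mul0n.
case: (ltnP m K.+2) => hK.
  have -> : aa l r m.+1 K.+3 = 0.
    apply/eqP; rewrite -leqn0 leqNgt aa_pos //; last by lia.
    apply/negP; lia.
  by rewrite muln0.
have [y hy] : exists y, m = K + y.+2 by exists (m - K.+2); lia.
have IH1 := IH K.+1. have IH2 := IH K. rewrite -/m hy in IH1 IH2.
rewrite !aa_rec // -/m hy.
have e0 : K + y.+2 - K.+2 = y by lia.
have e1 : K + y.+2 - K.+1 = y.+1 by lia.
have e2 : K + y.+2 - K = y.+2 by lia.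
have e3 : (K + y.+2).+1 - K.+1 = y.+2 by lia.
have e4 : (K + y.+2).+1 - K.+2 = y.+1 by lia.
have e5 : (K + y.+2).+2 - K.+1 = y.+3 by lia.
have e6 : (K + y.+2).+2 - K.+2 = y.+2 by lia.
have e7 : (K + y.+2).+2 - K.+3 = y.+1 by lia.
rewrite ?e0 ?e1 ?e2 ?e3 ?e4 ?e5 ?e6 ?e7 in IH1 IH2 *.
rewrite /= !mul1n -mulnA.
have hm2 : r <= K + y.+2 by rewrite -hy.
move: IH1 IH2 hm2; move: (K + y.+2) => M IH1 IH2 hm2.
apply: core.
- exact: hl.
- by rewrite mulnA; exact: IH1.
- by rewrite mulnA; exact: IH2.
- move=> hz.
  have Z1 : forall j, aa l r M j = 0 -> j < r \/ M < j.
    move=> j hj; have := aa_pos l r M j hl hr hm2; rewrite hj ltnn => /esym/negbT.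
    rewrite negb_and -!ltnNge => /orP[] ?; [left|right] => //.
  have Z2 : forall j, j < r \/ M < j -> aa l r M j = 0.
    move=> j hj; apply/eqP; rewrite -leqn0 leqNgt aa_pos //; apply/negP => /andP[??].
    case: hj => ?; lia.
  case: hz => /Z1 h.
  + case: h => h.
    * by rewrite (Z2 K) ?mul0n //; left; lia.
    * by rewrite (Z2 K.+3) ?muln0 //; right; lia.
  + case: h => h.
    * by rewrite (Z2 K) ?mul0n //; left; lia.
    * by rewrite (Z2 K.+3) ?muln0 //; right; lia.
Qed.

Lemma aa_LC l r n k : 0 < l -> 0 < r -> r <= n ->
  aa l r n k.+1 * aa l r n k.+3 <= aa l r n k.+2 ^ 2.
Proof.
move=> hl hr hn.
have J := aaJ l r n k.+1 hl hr hn.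
case: (leqP n k.+2) => h.
  have -> : aa l r n k.+3 = 0.
    apply/eqP; rewrite -leqn0 leqNgt aa_pos //; apply/negP => /andP[??]; lia.
  by rewrite muln0.
have c1pos : 0 < (k.+1 * (n - k.+2)) ^ l by rewrite expn_gt0 muln_gt0 subn_gt0 h.
have c12 : (k.+1 * (n - k.+2)) ^ l <= (k.+2 * (n - k.+1)) ^ l by apply: pw_le; nia.
rewrite -(leq_pmul2l c1pos).
apply: leq_trans _ J.
rewrite mulnA; apply: leq_mul => //; apply: leq_mul => //.
Qed.

Lemma desc (a : nat -> nat) k0 :
  (forall k, a k * a k.+2 <= a k.+1 ^ 2) ->
  (forall i j k, 0 < a i -> 0 < a j -> i <= k <= j -> 0 < a k) ->
  a k0.+1 < a k0 -> forall d, a (k0 + d).+1 <= a (k0 + d) /\ (a (k0+d).+1 < a (k0+d) \/ a (k0+d).+1 = 0).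
Proof.
move=> LC NIZ h0; elim=> [|d [IH1 IH2]]; first by rewrite addn0; split; [apply: ltnW|left].
rewrite addnS.
case: IH2 => [hlt|hz].
  case: (posnP (a (k0+d).+1)) => [hz|hp].
    have -> : a (k0 + d).+2 = 0.
      apply/eqP; rewrite -leqn0 leqNgt; apply/negP => hp2.
      have hc : k0 <= (k0+d).+1 <= (k0+d).+2 by apply/andP; split; lia.
      have := NIZ k0 (k0+d).+2 (k0+d).+1 (leq_ltn_trans (leq0n _) h0) hp2 hc.
      by rewrite hz ltnn.
    by split; [|right].
  have L := LC (k0 + d).
  have hlt2 : a (k0 + d).+2 < a (k0 + d).+1.
    rewrite ltnNge; apply/negP => hge.
    have : a (k0+d) * a (k0 + d).+1 <= a (k0+d) * a (k0+d).+2 by rewrite leq_mul2l hge orbT.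
    have : a (k0+d).+1 * a (k0 + d).+1 < a (k0+d) * a (k0+d).+1 by rewrite ltn_mul2r hp hlt.
    nia.
  by split; [apply: ltnW|left].
have -> : a (k0 + d).+2 = 0.
  apply/eqP; rewrite -leqn0 leqNgt; apply/negP => hp2.
  have hc : k0 <= (k0+d).+1 <= (k0+d).+2 by apply/andP; split; lia.
  have := NIZ k0 (k0+d).+2 (k0+d).+1 (leq_ltn_trans (leq0n _) h0) hp2 hc.
  by rewrite hz ltnn.
by split; [|right].
Qed.

Lemma lc_unimodal (a : nat -> nat) N :
  (forall k, a k * a k.+2 <= a k.+1 ^ 2) -> (forall k, N <= k -> a k = 0) ->
  (forall i j k, 0 < a i -> 0 < a j -> i <= k <= j -> 0 < a k) -> unimodal a.
Proof.
move=> LC Z NIZ.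
pose p := fun k => a k.+1 < a k.
pose m0 := find p (iota 0 N).
have hm0 : m0 <= N by rewrite -[N in _ <= N](size_iota 0 N) find_size.
exists m0; split.
  move=> k hk; have := before_find 0 hk; rewrite nth_iota ?add0n; last by lia.
  by rewrite /p => /negbT; rewrite -leqNgt.
move=> k hk.
case: (ltnP m0 N) => hN; last first.
  by rewrite (Z k.+1) //; lia.
have hp : p (nth 0 (iota 0 N) m0) by apply: nth_find; rewrite has_find size_iota.
rewrite nth_iota // add0n in hp.
have := @desc a m0 LC NIZ hp (k - m0); rewrite subnKC // => -[]; done.
Qed.

Set Implicit Arguments. Unset Strict Implicit. Unset Printing Implicit Defensive.

Definition wd (n : nat) (j : 'I_n) : 'I_n.+1 := widen_ord (leqnSn n) j.

Definition ext (n : nat) (f : {ffun 'I_n -> 'I_n}) (v : 'I_n.+1) : {ffun 'I_n.+1 -> 'I_n.+1} :=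
  [ffun i : 'I_n.+1 => if (insub (val i) : option 'I_n) is Some j then wd (f j) else v].

Lemma ext_wd n f v (j : 'I_n) : ext f v (wd j) = wd (f j).
Proof. by rewrite ffunE /= valK. Qed.

Lemma ext_max n f (v : 'I_n.+1) : ext f v ord_max = v.
Proof. by rewrite ffunE /= insubF //= ltnn. Qed.

Lemma split_ord n (i : 'I_n.+1) : i = ord_max \/ exists j : 'I_n, i = wd j.
Proof.
case: (ltnP i n) => h; [right; exists (Ordinal h)|left]; apply: val_inj => //=.
by apply/eqP; rewrite eqn_leq h -ltnS ltn_ord.
Qed.

Lemma wd_eq n (a b : 'I_n) : (wd a == wd b) = (a == b).
Proof. by apply/eqP/eqP => [/(congr1 val) /= /val_inj|->]. Qed.

Lemma wd_inj n : injective (@wd n).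
Proof. by move=> a b /eqP; rewrite wd_eq => /eqP. Qed.

Lemma blE n (f : {ffun 'I_n -> 'I_n}) i : (i \in bl f) = [forall j : 'I_n, (j < i) ==> (f j != f i)].
Proof.
rewrite inE; apply/negP/forallP => [H j|H].
  apply/implyP => hj; apply/negP => /eqP e; apply: H; apply/imsetP; exists j => //.
  by rewrite inE.
case/imsetP => j; rewrite inE => hj e.
by have := H j; rewrite hj e eqxx.
Qed.

Definition newb n (f : {ffun 'I_n -> 'I_n}) (v : 'I_n.+1) := [forall j, wd (f j) != v].

Lemma bl_ext_wd n f v (j : 'I_n) : (wd j \in bl (ext f v)) = (j \in bl f).
Proof.
rewrite !blE; apply/forallP/forallP => H j'.
  have := H (wd j'); rewrite !ext_wd wd_eq //.
apply/implyP => hj; case: (split_ord j') => [e|[j'' e]].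
  by move: hj; rewrite e /=; move: (ltn_ord j); lia.
by move: hj (H j''); rewrite e !ext_wd wd_eq => /= ->.
Qed.

Lemma bl_ext_max n f (v : 'I_n.+1) : (ord_max \in bl (ext f v)) = newb f v.
Proof.
rewrite blE; apply/forallP/forallP => H j.
  by have := H (wd j); rewrite ext_wd ext_max /= ltn_ord.
apply/implyP => hj; case: (split_ord j) => [e|[j'' e]].
  by move: hj; rewrite e ltnn.
by rewrite e ext_wd ext_max.
Qed.

Lemma subexc_ext n f (v : 'I_n.+1) : subexceedant (ext f v) = subexceedant f.
Proof.
apply/forallP/forallP => H j.
  by have := H (wd j); rewrite ext_wd.
case: (split_ord j) => [->|[j'' ->]]; first by rewrite ext_max /= -ltnS.
by rewrite ext_wd; exact: H.
Qed.

Lemma card_bl_ext n f (v : 'I_n.+1) : #|bl (ext f v)| = #|bl f| + newb f v.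
Proof.
rewrite -!sum1_card big_mkcond [in RHS]big_mkcond /= big_ord_recr /=.
rewrite -bl_ext_max; congr (_ + _); first by apply: eq_bigr => i _; rewrite -[widen_ord _ i]/(wd i) bl_ext_wd.
Qed.

Lemma r_ext n f (v : 'I_n.+1) r :
  [forall i : 'I_n.+1, (i < r) ==> (i \in bl (ext f v))] =
  [forall i : 'I_n, (i < r) ==> (i \in bl f)] && ((n < r) ==> newb f v).
Proof.
apply/forallP/andP => [H|[/forallP H1 /implyP H2] i].
  split; first by apply/forallP => i; have := H (wd i); rewrite bl_ext_wd.
  by apply/implyP => h; have := H ord_max; rewrite bl_ext_max /= h.
case: (split_ord i) => [->|[j ->]].
  by rewrite bl_ext_max; apply/implyP => /H2.
by rewrite bl_ext_wd; exact: H1.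
Qed.

Lemma bl_ext_eq n f g (v w : 'I_n.+1) :
  (bl (ext f v) == bl (ext g w)) = (bl f == bl g) && (newb f v == newb g w).
Proof.
apply/eqP/andP => [H|[/eqP H1 /eqP H2]].
  split; last by rewrite -!bl_ext_max H.
  by apply/eqP/setP => j; rewrite -(bl_ext_wd f v) -(bl_ext_wd g w) H.
apply/setP => i; case: (split_ord i) => [->|[j ->]].
  by rewrite !bl_ext_max.
by rewrite !bl_ext_wd H1.
Qed.

Definition img n (f : {ffun 'I_n -> 'I_n}) : {set 'I_n.+1} := [set wd (f j) | j : 'I_n].

Lemma newbE n f (v : 'I_n.+1) : newb f v = (v \notin img f).
Proof.
apply/forallP/negP => [H /imsetP [j _ e]|H j]; first by have := H j; rewrite e eqxx.
by apply/eqP => e; apply: H; apply/imsetP; exists j.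
Qed.

Lemma img_bl n (f : {ffun 'I_n -> 'I_n}) (i : 'I_n) : f i \in f @: bl f.
Proof.
suff: forall m (i : 'I_n), i < m -> f i \in f @: bl f by apply; exact: ltnSn.
elim=> [|m IH] {}i hi //.
case hb: (i \in bl f); first by apply: imset_f.
move: hb; rewrite inE => /negbFE /imsetP [j]; rewrite inE => hj ->.
by apply: IH; lia.
Qed.

Lemma bl_inj n (f : {ffun 'I_n -> 'I_n}) : {in bl f &, injective f}.
Proof.
have H : forall i i', i \in bl f -> i' \in bl f -> f i = f i' -> i < i' -> False.
  move=> i i' _ hi' e lt; move: hi'; rewrite inE => /negP; apply.
  by apply/imsetP; exists i; rewrite ?inE.
move=> i i' hi hi' e; case: (ltngtP i i') => c.
- by case: (H _ _ hi hi' e c).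
- by case: (H _ _ hi' hi (esym e) c).
- exact: val_inj.
Qed.

Lemma card_img n (f : {ffun 'I_n -> 'I_n}) : #|img f| = #|bl f|.
Proof.
have -> : img f = (@wd n) @: (f @: [set: 'I_n]).
  apply/setP => x; apply/imsetP/imsetP => [[j _ ->]|[y /imsetP[j _ ->] ->]].
    by exists (f j) => //; apply: imset_f.
  by exists j.
rewrite card_imset; last exact: wd_inj.
have -> : f @: [set: 'I_n] = f @: bl f.
  apply/eqP; rewrite eqEsubset; apply/andP; split.
    by apply/subsetP => x /imsetP [i _ ->]; exact: img_bl.
  by apply: imsetS; apply: subsetT.
exact: card_in_imset (@bl_inj n f).
Qed.
Lemma prod_bool (I : finType) (b : I -> bool) : \prod_i (b i : nat) = [forall i, b i].
Proof.
have -> : [forall i, b i] = \big[andb/true]_i b i by rewrite big_andE.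
by rewrite (big_morph (fun x : bool => x : nat) (id1 := 1) (op1 := muln) (fun x y => esym (mulnb x y)) (erefl (nat_of_bool true))).
Qed.

Lemma card_ffun_forall (I J : finType) (P : I -> pred J) :
  #|[set v : {ffun I -> J} | [forall i, P i (v i)]]| = \prod_i #|[set x | P i x]|.
Proof.
have -> : \prod_i #|[set x | P i x]| = \prod_i \sum_j (P i j : nat).
  apply: eq_bigr => i _; rewrite -sum1_card big_mkcond /=; apply: eq_bigr => j _.
  by rewrite inE; case: (P i j).
rewrite bigA_distr_bigA /= -sum1_card big_mkcond /=; apply: eq_bigr => f _.
by rewrite prod_bool inE; case: [forall i, _].
Qed.

Lemma sum_bool_card (T : finType) (P : pred T) : \sum_x (P x : nat) = #|[set x | P x]|.
Proof. by rewrite -sum1_card [RHS]big_mkcond /=; apply: eq_bigr => x _; rewrite inE; case: (P x). Qed.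

Lemma card_pair (A B : finType) (P : A -> B -> bool) :
  #|[set p : A * B | P p.1 p.2]| = \sum_a #|[set b | P a b]|.
Proof.
rewrite -sum_bool_card.
under [RHS]eq_bigr => a _ do rewrite -sum_bool_card.
by rewrite pair_bigA.
Qed.

Lemma forall_andb (T : finType) (a b : pred T) : [forall j, a j && b j] = [forall j, a j] && [forall j, b j].
Proof.
apply/forallP/andP => [H|[/forallP H1 /forallP H2] j]; last by rewrite H1 H2.
by split; apply/forallP => j; case/andP: (H j).
Qed.

Definition base l' r n (t : {ffun 'I_l'.+1 -> {ffun 'I_n -> 'I_n}}) : bool :=
  [forall j, subexceedant (t j)] && [forall i : 'I_n, (i < r) ==> (i \in bl (t ord0))]
  && [forall j, bl (t j) == bl (t ord0)].
Definition Gp l' r n k (t : {ffun 'I_l'.+1 -> {ffun 'I_n -> 'I_n}}) : bool :=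
  base r t && (#|bl (t ord0)| == k).
Definition B l' r n k := #|[set t : {ffun 'I_l'.+1 -> {ffun 'I_n -> 'I_n}} | Gp r k t]|.

Lemma A_B l' r n k : A l'.+1 r n k = B l' r n k.+1.
Proof.
rewrite /A /B; apply: eq_card => t; rewrite !inE /Gp /base.
apply/idP/idP.
  case/andP => HS /existsP [j0 /and4P [/eqP h0 Hr Hc Hb]].
  have e : j0 = ord0 by apply: val_inj.
  by subst j0; rewrite HS Hr Hb Hc.
case/andP=> /andP[/andP[HS Hr] Hb] Hc; rewrite HS /=; apply/existsP; exists ord0.
by rewrite /= Hr Hc Hb.
Qed.

Definition phi l' n (p : {ffun 'I_l'.+1 -> {ffun 'I_n -> 'I_n}} * {ffun 'I_l'.+1 -> 'I_n.+1}) :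
  {ffun 'I_l'.+1 -> {ffun 'I_n.+1 -> 'I_n.+1}} := [ffun j => ext (p.1 j) (p.2 j)].

Lemma ext_inj n f g (v w : 'I_n.+1) : ext f v = ext g w -> f = g /\ v = w.
Proof.
move=> e; split; last by rewrite -(ext_max f v) -(ext_max g w) e.
by apply/ffunP => j; apply: wd_inj; rewrite -(ext_wd f v) -(ext_wd g w) e.
Qed.

Lemma phi_inj l' n : injective (@phi l' n).
Proof.
move=> [t v] [t' v'] /ffunP e.
have H : forall j, t j = t' j /\ v j = v' j.
  by move=> j; apply: ext_inj; have := e j; rewrite !ffunE.
by congr pair; apply/ffunP => j; case: (H j).
Qed.

Definition res n (f : {ffun 'I_n.+1 -> 'I_n.+1}) : {ffun 'I_n -> 'I_n} :=
  [ffun j => odflt j (insub (val (f (wd j))))].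

Lemma ext_res n (f : {ffun 'I_n.+1 -> 'I_n.+1}) : subexceedant f -> ext (res f) (f ord_max) = f.
Proof.
move=> /forallP hs; apply/ffunP => i; case: (split_ord i) => [->|[j ->]]; first by rewrite ext_max.
rewrite ext_wd ffunE.
have h : val (f (wd j)) < n by have := hs (wd j); rewrite /=; move: (ltn_ord j); lia.
case: insubP => [u _ e|]; last by rewrite h.
by apply: val_inj; rewrite /= e.
Qed.

Lemma B_pairs l' r n k : B l' r n.+1 k = #|[set p | Gp r k (@phi l' n p)]|.
Proof.
rewrite /B -(card_imset _ (@phi_inj l' n)); apply: eq_card => t'.
rewrite inE; apply/idP/imsetP => [h|[p]]; last by rewrite inE => hp ->.
have hs : forall j, subexceedant (t' j) by move: h; rewrite /Gp /base => /andP[/andP[/andP[/forallP ? _] _] _].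
exists ([ffun j => res (t' j)], [ffun j => t' j ord_max]); last first.
  by apply/ffunP => j; rewrite !ffunE /= ext_res.
rewrite inE.
have -> : phi ([ffun j => res (t' j)], [ffun j => t' j ord_max]) = t' by apply/ffunP => j; rewrite !ffunE /= ext_res.
exact: h.
Qed.

Lemma rearr1 (a b c d e : bool) : [&& [&& a, b & true], c & d] && e = [&& a && b && c, e & d].
Proof. by case: a; case: b; case: c; case: d; case: e. Qed.
Lemma rearr2 (a b c d e f : bool) : [&& [&& a, b & ~~ f], c & d] && e = [&& a && b && c, (~~ f) && e & d].
Proof. by case: a; case: b; case: c; case: d; case: e; case: f. Qed.

Lemma Gp_phi l' r n k t v :
  Gp r k (@phi l' n (t, v)) = base r t &&
    (if newb (t ord0) (v ord0)
     then (#|bl (t ord0)|.+1 == k) && [forall j, newb (t j) (v j)]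
     else (r <= n) && (#|bl (t ord0)| == k) && [forall j, ~~ newb (t j) (v j)]).
Proof.
have E : forall j, phi (t, v) j = ext (t j) (v j) by move=> j; rewrite ffunE.
rewrite /Gp /base.
under eq_forallb => j do rewrite E subexc_ext.
under [X in _ && X && _]eq_forallb => j do rewrite !E bl_ext_eq.
rewrite E r_ext card_bl_ext forall_andb.
case: (newb (t ord0) (v ord0)).
  rewrite (eq_forallb (fun j => eqb_id (newb (t j) (v j)))).
  rewrite implybT addn1.
  exact: rearr1.
rewrite (eq_forallb (fun j => eqbF_neg (newb (t j) (v j)))).
rewrite implybF addn0.
rewrite [r <= n]leqNgt; exact: rearr2.
Qed.

Lemma card_newb n (f : {ffun 'I_n -> 'I_n}) : #|[set x | newb f x]| = n.+1 - #|bl f|.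
Proof.
have -> : [set x | newb f x] = ~: img f by apply/setP => x; rewrite !inE newbE.
by rewrite cardsCs setCK card_ord card_img.
Qed.

Lemma card_oldb n (f : {ffun 'I_n -> 'I_n}) : #|[set x | ~~ newb f x]| = #|bl f|.
Proof.
have -> : [set x | ~~ newb f x] = img f by apply/setP => x; rewrite !inE newbE negbK.
exact: card_img.
Qed.

Lemma sum_andb (T : finType) (b : bool) (P : pred T) : \sum_x ((b && P x) : nat) = b * #|[set x | P x]|.
Proof. by case: b; rewrite ?mul1n ?mul0n -?sum_bool_card // big1. Qed.

Lemma inner l' r n k t :
  \sum_v (Gp r k (@phi l' n (t, v)) : nat) =
  (r <= n) * k ^ l'.+1 * Gp r k t + (0 < k) * (n.+2 - k) ^ l'.+1 * Gp r k.-1 t.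
Proof.
under eq_bigr => v _ do rewrite Gp_phi.
rewrite /Gp; case hb: (base r t); last by rewrite big1 // ?muln0.
rewrite /=.
set s := #|bl (t ord0)|.
have key : forall v : {ffun 'I_l'.+1 -> 'I_n.+1},
  ((if newb (t ord0) (v ord0) then (s.+1 == k) && [forall j, newb (t j) (v j)]
    else (r <= n) && (s == k) && [forall j, ~~ newb (t j) (v j)]) : nat) =
  ((s.+1 == k) && [forall j, newb (t j) (v j)]) + ((r <= n) && (s == k) && [forall j, ~~ newb (t j) (v j)]).
  move=> v; case h: (newb (t ord0) (v ord0)).
  - have -> : [forall j, ~~ newb (t j) (v j)] = false.
      by apply/negbTE/negP => /forallP /(_ ord0); rewrite h.
    by rewrite andbF addn0.
  - have -> : [forall j, newb (t j) (v j)] = false.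
      by apply/negbTE/negP => /forallP /(_ ord0); rewrite h.
    by rewrite andbF.
under eq_bigr => v _ do rewrite key.
rewrite big_split /= !sum_andb (card_ffun_forall (fun j => newb (t j))) (card_ffun_forall (fun j x => ~~ newb (t j) x)).
have hbl : forall j, bl (t j) = bl (t ord0).
  by move=> j; move: hb; rewrite /base => /andP[_ /forallP /(_ j) /eqP].
under eq_bigr => j _ do rewrite card_newb hbl.
under [X in _ + _ * X]eq_bigr => j _ do rewrite card_oldb hbl.
rewrite !prod_nat_const !card_ord -/s.
clear key; case: k => [|k] /=.
  by case: eqP => [->|]; rewrite ?andbF ?exp0n ?muln0 ?mul0n.
rewrite eqSS subSS.
case: (eqVneq s k) => [->|ne].
  have -> : (k == k.+1) = false by apply/eqP; lia.
  by rewrite andbF /= !mul1n !muln0 muln1 addn0 add0n.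
rewrite /= mul0n add0n muln0 addn0.
by case: eqP => [->|_]; rewrite ?andbT ?andbF /= ?muln1 ?muln0 ?mul0n // mulnC.
Qed.

Lemma B_rec l' r n k :
  B l' r n.+1 k = (r <= n) * k ^ l'.+1 * B l' r n k + (0 < k) * (n.+2 - k) ^ l'.+1 * B l' r n k.-1.
Proof.
rewrite B_pairs.
have -> : [set p | Gp r k (@phi l' n p)] = [set p | Gp r k (@phi l' n (p.1, p.2))] by apply/setP => -[].
rewrite (card_pair (fun t v => Gp r k (@phi l' n (t, v)))).
under eq_bigr => t _ do rewrite -sum_bool_card inner.
by rewrite big_split /= -!big_distrr /= !sum_bool_card.
Qed.

Lemma B0 l' r k : B l' r 0 k = (k == 0).
Proof.
rewrite /B.
have hb : forall t : {ffun 'I_l'.+1 -> {ffun 'I_0 -> 'I_0}}, Gp r k t = (k == 0).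
  move=> t; rewrite /Gp /base.
  have -> : bl (t ord0) = set0 by apply/setP => -[].
  rewrite cards0 eq_sym.
  have -> : [forall j, subexceedant (t j)] by apply/forallP => j; apply/forallP => -[].
  have -> : [forall i : 'I_0, (i < r) ==> (i \in set0)] by apply/forallP => -[].
  have -> : [forall j, bl (t j) == set0] by apply/forallP => j; apply/eqP/setP => -[].
  by [].
case: eqP => [e|ne].
  subst k.
  have -> : [set t : {ffun 'I_l'.+1 -> {ffun 'I_0 -> 'I_0}} | Gp r 0 t] = setT by apply/setP => t; rewrite !inE hb.
  rewrite cardsT card_ffun. have c : #|{ffun 'I_0 -> 'I_0}| = 1 by rewrite card_ffun !card_ord. by rewrite c exp1n.
have -> : [set t : {ffun 'I_l'.+1 -> {ffun 'I_0 -> 'I_0}} | Gp r k t] = set0.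
  by apply/setP => t; rewrite !inE hb; apply/eqP.
by rewrite cards0.
Qed.

Lemma B_aa l' r n k : B l' r n k = aa l'.+1 r n k.
Proof.
elim: n k => [|n IH] k; first by rewrite B0.
by rewrite B_rec !IH.
Qed.

Theorem mainTheorem9 (l r n : nat) (hl : (0 < l)%N) (hr : (0 < r)%N) (hn : (r <= n)%N) :
  log_concave (fun k => A l r n k) /\ unimodal (fun k => A l r n k).
Proof.
case: l hl => [//|l'] hl.
have HA : forall k, A l'.+1 r n k = aa l'.+1 r n k.+1 by move=> k; rewrite A_B B_aa.
split.
- move=> k /=; rewrite !HA; exact: aa_LC.
- apply: (@lc_unimodal _ n).
  + move=> k /=; rewrite !HA; exact: aa_LC.
  + move=> k hk /=; rewrite HA; apply/eqP; rewrite -leqn0 leqNgt aa_pos //.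
    apply/negP => /andP[_ h]; lia.
  + move=> i j k /=; rewrite !HA !aa_pos // => /andP[? ?] /andP[? ?] /andP[? ?].
    apply/andP; split; lia.
Qed.
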